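(* Let $D=D_F$ be a $\tau$-admissible Bregman divergence on an open convex domain $\mathcal{X}\subseteq\mathbb{R}^d$ and let $0<\varepsilon\le 1$. Let $w\subseteq\mathcal{X}$ be a set and $B_w\subseteq\mathcal{X}$ a Euclidean ball with $\mathrm{dist}(B_w,w)\ge\beta\cdot\mathrm{diam}(B_w)$, where $\beta\ge 4\tau^2/\varepsilon$. Then for any $q\in w$ and any $p,p'\in B_w$, $\dfrac{|D(q,p)-D(q,p')|}{D(q,p)}\le\varepsilon$.
   Context: $F$ is strictly convex and twice differentiable on $\mathcal{X}$ and $D_F(q,p)=F(q)-F(p)-\langle\nabla F(p),q-p\rangle$. For a site $p$, $f_p(x)=D_F(x,p)$ with derivatives in $x$. $D_F$ is $\tau$-admissible if for all $p,x\in\mathcal{X}$: $\|\nabla f_p(x)\|\,\|x-p\|\le\tau f_p(x)$ and $\|\nabla^2 f_p(x)\|\,\|x-p\|^2\le\tau^2 f_p(x)$ (Euclidean/spectral norms). $\mathrm{dist}$ denotes minimum Euclidean distance between sets. (In the paper, $w$ is a leaf cell of a BBD-tree decomposition and $B_w$ its inner-cluster ball; only the stated separation property is used.) *)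

(* Defs.v *)
From HB Require Import structures.
From mathcomp Require Import all_boot all_order all_algebra.
From mathcomp Require Import all_classical all_reals all_analysis.
Set Implicit Arguments. Unset Strict Implicit. Unset Printing Implicit Defensive.
Import Order.TTheory GRing.Theory Num.Theory.
Import numFieldNormedType.Exports.
Local Open Scope classical_set_scope.
Local Open Scope ring_scope.

Section Defs.
Variables (R : realType) (d : nat).
Notation V := 'rV[R]_d.

Definition euclid_dotp (u v : V) : R := \sum_(i < d) u 0 i * v 0 i.
Definition euclid_norm (v : V) : R := Num.sqrt (euclid_dotp v v).

Definition std_basis (i : 'I_d) : V := delta_mx 0 i.

Definition partial_deriv (i : 'I_d) (f : V -> R) (x : V) : R := 'D_(std_basis i) f x.
Definition gradient (f : V -> R) (x : V) : V := \row_i partial_deriv i f x.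
Definition hessian (f : V -> R) (x : V) : 'M[R]_d :=
  \matrix_(i, j) partial_deriv j (partial_deriv i f) x.

Definition spectral_norm (M : 'M[R]_d) : R :=
  sup [set euclid_norm (v *m M) | v in [set v : V | euclid_norm v <= 1]].

Definition strictly_convex_on (X : set V) (F : V -> R) : Prop :=
  forall x y t, X x -> X y -> x != y -> 0 < t < 1 ->
    F ((1 - t) *: x + t *: y) < (1 - t) * F x + t * F y.

Definition twice_differentiable_on (X : set V) (F : V -> R) : Prop :=
  forall x, X x -> differentiable F x /\ forall i, differentiable (partial_deriv i F) x.

Definition bregman_div (F : V -> R) (q p : V) : R :=
  F q - F p - euclid_dotp (gradient F p) (q - p).

Definition tau_admissible (X : set V) (F : V -> R) (tau : R) : Prop :=
  forall p x, X p -> X x ->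
    euclid_norm (gradient (bregman_div F ^~ p) x) * euclid_norm (x - p) <= tau * bregman_div F x p /\
    spectral_norm (hessian (bregman_div F ^~ p) x) * euclid_norm (x - p) ^+ 2
      <= tau ^+ 2 * bregman_div F x p.

Definition euclid_ball (c : V) (r : R) : set V := [set x | euclid_norm (x - c) <= r].
Definition euclid_diam (A : set V) : R :=
  sup [set euclid_norm (x - y) | x in A & y in A].
Definition euclid_dist (A B : set V) : R :=
  inf [set euclid_norm (x - y) | x in A & y in B].
End Defs.

(* Main.v *)
Require Import Defs.
From HB Require Import structures.
From mathcomp Require Import all_boot all_order all_algebra.
From mathcomp Require Import all_classical all_reals all_analysis.
From mathcomp Require Import ring lra.
Import Order.TTheory GRing.Theory Num.Theory.
Import numFieldNormedType.Exports.
Local Open Scope classical_set_scope.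
Local Open Scope ring_scope.

Set Implicit Arguments. Unset Strict Implicit. Unset Printing Implicit Defensive.


Section Eucl.
Variables (R : realType) (d : nat).
Notation V := 'rV[R]_d.
Notation dot := (@euclid_dotp R d).
Notation nrm := (@euclid_norm R d).

Lemma dotC (u v : V) : dot u v = dot v u.
Proof. by apply: eq_bigr => i _; rewrite mulrC. Qed.

Lemma dotDl (u v w : V) : dot (u + w) v = dot u v + dot w v.
Proof. by rewrite /euclid_dotp -big_split; apply: eq_bigr => i _; rewrite !mxE mulrDl. Qed.

Lemma dotZl (a : R) (u v : V) : dot (a *: u) v = a * dot u v.
Proof. by rewrite /euclid_dotp mulr_sumr; apply: eq_bigr => i _; rewrite !mxE mulrA. Qed.

Lemma dotNl (u v : V) : dot (- u) v = - dot u v.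
Proof. by rewrite -scaleN1r dotZl mulN1r. Qed.

Lemma dotBl (u v w : V) : dot (u - w) v = dot u v - dot w v.
Proof. by rewrite dotDl dotNl. Qed.

Lemma dotDr (u v w : V) : dot u (v + w) = dot u v + dot u w.
Proof. by rewrite dotC dotDl !(dotC u). Qed.
Lemma dotZr (a : R) (u v : V) : dot u (a *: v) = a * dot u v.
Proof. by rewrite dotC dotZl dotC. Qed.
Lemma dotBr (u v w : V) : dot u (v - w) = dot u v - dot u w.
Proof. by rewrite dotC dotBl !(dotC u). Qed.

Lemma dot_ge0 (u : V) : 0 <= dot u u.
Proof. by apply: sumr_ge0 => i _; rewrite -expr2 sqr_ge0. Qed.

Lemma nrm_ge0 (u : V) : 0 <= nrm u.
Proof. exact: sqrtr_ge0. Qed.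

Lemma nrm_sq (u : V) : nrm u ^+ 2 = dot u u.
Proof. by rewrite sqr_sqrtr // dot_ge0. Qed.

Lemma CS (u v : V) : `|dot u v| <= nrm u * nrm v.
Proof.
have key : forall t : R, 0 <= dot u u + 2 * t * dot u v + t ^+ 2 * dot v v.
  move=> t; have := dot_ge0 (u + t *: v).
  rewrite !dotDl !dotDr !dotZl !dotZr (dotC v u); lra.
have sq : dot u v ^+ 2 <= dot u u * dot v v.
  have [c0|cpos] := eqVneq (dot v v) 0.
    have [b0|bn0] := eqVneq (dot u v) 0.
      by rewrite b0 expr0n /= mulr_ge0 // dot_ge0.
    have := key (- (dot u u + 1) / (2 * dot u v)).
    set b := dot u v; set a := dot u u.
    have -> : 2 * (- (a + 1) / (2 * b)) * b = - (a + 1) by field.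
    by rewrite c0 mulr0 addr0; lra.
  have cp : 0 < dot v v by rewrite lt_neqAle eq_sym cpos dot_ge0.
  have h := key (- dot u v / dot v v).
  move: h cp; set b := dot u v; set a := dot u u; set c := dot v v => h cp.
  have e : a + 2 * (- b / c) * b + (- b / c) ^+ 2 * c = a - b ^+ 2 / c.
    by field; rewrite gt_eqF.
  rewrite e subr_ge0 ler_pdivrMr // in h.
have h1 : `|dot u v| \in Num.nneg by rewrite nnegrE.
have h2 : nrm u * nrm v \in Num.nneg by rewrite nnegrE mulr_ge0 // nrm_ge0.
rewrite -(ler_pXn2r (isT : (0 < 2)%N) h1 h2).
by rewrite exprMn !nrm_sq real_normK // num_real.
Qed.

Lemma nrmZ (a : R) (u : V) : nrm (a *: u) = `|a| * nrm u.
Proof.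
by rewrite /euclid_norm dotZl dotZr mulrA -expr2 sqrtrM ?sqr_ge0 // sqrtr_sqr.
Qed.

Lemma nrmN (u : V) : nrm (- u) = nrm u.
Proof. by rewrite -scaleN1r nrmZ normrN normr1 mul1r. Qed.

Lemma nrmB (u v : V) : nrm (u - v) = nrm (v - u).
Proof. by rewrite -nrmN opprB. Qed.

Lemma nrm0 : nrm (0 : V) = 0.
Proof. by rewrite -(scale0r (0 : V)) nrmZ normr0 mul0r. Qed.

Lemma nrmD (u v : V) : nrm (u + v) <= nrm u + nrm v.
Proof.
have h1 : nrm (u + v) \in Num.nneg by rewrite nnegrE nrm_ge0.
have h2 : nrm u + nrm v \in Num.nneg by rewrite nnegrE addr_ge0 // nrm_ge0.
rewrite -(ler_pXn2r (isT : (0 < 2)%N) h1 h2).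
rewrite nrm_sq sqrrD !nrm_sq !dotDl !dotDr (dotC v u).
have := CS u v; have := ler_norm (dot u v); lra.
Qed.

Lemma coord_le_nrm (u : V) i : `|u 0 i| <= nrm u.
Proof.
have h1 : `|u 0 i| \in Num.nneg by rewrite nnegrE.
have h2 : nrm u \in Num.nneg by rewrite nnegrE nrm_ge0.
rewrite -(ler_pXn2r (isT : (0 < 2)%N) h1 h2) nrm_sq real_normK ?num_real //.
rewrite /euclid_dotp (bigD1 i) //= -expr2 lerDl.
by apply: sumr_ge0 => j _; rewrite -expr2 sqr_ge0.
Qed.

Lemma nrm_sum {I : finType} (f : I -> V) : nrm (\sum_i f i) <= \sum_i nrm (f i).
Proof.
elim/big_ind2: _ => //; first by rewrite nrm0.
by move=> x1 x2 y1 y2 h1 h2; apply: le_trans (nrmD _ _) _; apply: lerD.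
Qed.

Lemma mx_bound (M : 'M[R]_d) : exists K, 0 <= K /\ forall v : V, nrm (v *m M) <= K * nrm v.
Proof.
exists (\sum_i nrm (row i M)); split; first by apply: sumr_ge0 => i _; exact: nrm_ge0.
move=> v; rewrite mulmx_sum_row.
apply: le_trans (nrm_sum (fun i => v 0 i *: row i M)) _.
rewrite mulr_suml; apply: ler_sum => i _; rewrite nrmZ mulrC.
by apply: ler_wpM2l; [exact: nrm_ge0 | exact: coord_le_nrm].
Qed.

Lemma spectral_bound (M : 'M[R]_d) (w : V) :
  nrm (w *m M) <= spectral_norm M * nrm w.
Proof.
have [K [K0 HK]] := mx_bound M.
set S := [set nrm (v *m M) | v in [set v : V | nrm v <= 1]].
have hub : has_ubound S.
  exists K => y [v /= v1 <-]; apply: le_trans (HK v) _.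
  by rewrite -[leRHS]mulr1 ler_wpM2l.
have [w0|wn0] := eqVneq (nrm w) 0.
  by rewrite w0 mulr0; have := HK w; rewrite w0 mulr0.
have wp : 0 < nrm w by rewrite lt_neqAle eq_sym wn0 nrm_ge0.
have : nrm (((nrm w)^-1 *: w) *m M) <= spectral_norm M.
  apply: (ub_le_sup hub); exists ((nrm w)^-1 *: w) => //=.
  by rewrite nrmZ ger0_norm ?invr_ge0 ?nrm_ge0 // mulVf.
rewrite -scalemxAl nrmZ ger0_norm ?invr_ge0 ?nrm_ge0 //.
by rewrite mulrC -ler_pdivlMr ?invr_gt0 // invrK.
Qed.

Lemma spectral_ge0 (M : 'M[R]_d) : 0 <= spectral_norm M.
Proof.
have [K [K0 HK]] := mx_bound M.
have hub : has_ubound [set nrm (v *m M) | v in [set v : V | nrm v <= 1]].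
  exists K => y [v /= v1 <-]; apply: le_trans (HK v) _.
  by rewrite -[leRHS]mulr1 ler_wpM2l.
apply: (ub_le_sup hub); exists 0; first by rewrite /= nrm0.
by rewrite mul0mx nrm0.
Qed.

Lemma ball_diam (c x y : V) (r : R) : euclid_ball c r x -> euclid_ball c r y ->
  nrm (x - y) <= euclid_diam (euclid_ball c r).
Proof.
move=> hx hy; apply: ub_le_sup; last by exists x => //; exists y.
exists (r + r) => z [a ha [b hb <-]].
rewrite (_ : a - b = (a - c) + (c - b)); last by rewrite addrA subrK.
apply: le_trans (nrmD _ _) _; apply: lerD => //; rewrite nrmB; exact: hb.
Qed.

Lemma dist_le (A B : set V) x y : A x -> B y -> euclid_dist A B <= nrm (x - y).
Proof.
move=> hx hy; apply: ge_inf; last by exists x => //; exists y.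
by exists 0 => z [a ha [b hb <-]]; exact: nrm_ge0.
Qed.

End Eucl.


Section Calc.
Variables (R : realType) (d : nat).
Notation V := 'rV[R]_d.
Notation dot := (@euclid_dotp R d).
Notation nrm := (@euclid_norm R d).

Lemma is_derive_line (f : V -> R) (a v : V) (t : R) :
  derivable f (a + t *: v) v ->
  is_derive t 1 (fun s => f (a + s *: v)) ('D_v f (a + t *: v)).
Proof.
move=> df.
have E : (fun h : R => h^-1 *: (((fun s => f (a + s *: v)) \o shift t) (h *: 1)
            - f (a + t *: v))) =
         (fun h : R => h^-1 *: ((f \o shift (a + t *: v)) (h *: v) - f (a + t *: v))).
  apply/funext => h /=; congr (_ *: (f _ - _)).
  by rewrite [h *: 1]mulr1 scalerDl addrCA addrA.
split.
  by move: df; rewrite /derivable -E.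
by rewrite /derive E.
Qed.

Lemma vec_sum (v : V) : v = \sum_i v 0 i *: std_basis R i.
Proof.
apply/rowP => j; rewrite summxE (bigD1 j) //= big1 => [|i ij].
  by rewrite !mxE !eqxx mulr1 addr0.
by rewrite !mxE eq_sym (negbTE ij) andbF mulr0.
Qed.

Lemma deriveE_sum (f : V -> R) x v : differentiable f x ->
  'D_v f x = \sum_i v 0 i * partial_deriv i f x.
Proof.
move=> df; rewrite deriveE // {1}(vec_sum v) linear_sum.
by apply: eq_bigr => i _; rewrite linearZ /= /partial_deriv deriveE.
Qed.

Lemma is_derive_dot (c z v : V) : is_derive z v (fun y => dot c y) (dot c v).
Proof.
have E : forall h : R, h != 0 ->
    h^-1 *: ((fun y => dot c y) \o shift z) (h *: v) - h^-1 *: dot c z = dot c v.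
  move=> h h0 /=; rewrite dotDr dotZr /GRing.scale /=.
  by field.
have cv : (fun h : R => h^-1 *: (((fun y => dot c y) \o shift z) (h *: v) - dot c z)) @ 0^'
           --> dot c v.
  apply: cvg_near_cst; near=> h; rewrite scalerBr; apply: E.
  by near: h; exact: nbhs_dnbhs_neq.
split; first by apply/cvg_ex; exists (dot c v).
exact: cvg_lim cv.
Unshelve. all: by end_near.
Qed.


Lemma d_add (f g : R -> R) (t df dg : R) : is_derive t 1 f df -> is_derive t 1 g dg ->
  is_derive t 1 (fun s => f s + g s) (df + dg).
Proof. by move=> hf hg; exact: (is_deriveD hf hg). Qed.

Lemma d_sub (f g : R -> R) (t df dg : R) : is_derive t 1 f df -> is_derive t 1 g dg ->
  is_derive t 1 (fun s => f s - g s) (df - dg).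
Proof. by move=> hf hg; exact: (is_deriveB hf hg). Qed.

Lemma d_mul (f g : R -> R) (t df dg : R) : is_derive t 1 f df -> is_derive t 1 g dg ->
  is_derive t 1 (fun s => f s * g s) (df * g t + f t * dg).
Proof.
move=> hf hg; have := is_deriveM hf hg.
by rewrite /GRing.scale /= addrC [df * _]mulrC.
Qed.

Lemma d_cst (c t : R) : is_derive t 1 (fun _ : R => c) 0.
Proof. exact: is_derive_cst. Qed.

Lemma d_id (t : R) : is_derive t 1 (fun s : R => s) 1.
Proof. exact: is_derive_id. Qed.

Lemma d_inv (t : R) : t != 0 -> is_derive t 1 (fun s : R => s^-1) (- t ^- 2).
Proof.
move=> t0; have di : derivable (@id R) t 1 by exact: derivable_id.
split.
  exact: (@derivableV _ _ (@id R) t 1 t0 di).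
rewrite (@deriveV _ _ (@id R) t 1 t0 di).
by rewrite derive_id /GRing.scale /= mulr1.
Qed.

Lemma d_sum n (h : 'I_n -> R -> R) (t : R) (dh : 'I_n -> R) :
  (forall i, is_derive t 1 (h i) (dh i)) ->
  is_derive t 1 (fun s => \sum_i h i s) (\sum_i dh i).
Proof.
move=> hh; have := is_derive_sum hh.
by rewrite fct_sumE.
Qed.

Lemma is_derive_line_cont (f : R -> R) (a b : R) df :
  (forall t, a <= t <= b -> is_derive t 1 f (df t)) ->
  {within `[a, b], continuous f}.
Proof.
move=> h; apply: derivable_within_continuous => t; rewrite in_itv /= => ht.
by have [] := h t ht.
Qed.


Lemma is_derive_aff (c z v : V) (b : R) :
  is_derive z v (fun y => b + dot c y) (dot c v).
Proof.
have := is_deriveD (is_derive_cst b z v) (is_derive_dot c z v).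
by rewrite add0r.
Qed.

Lemma dot_basis (g : V) i : dot g (std_basis R i) = g 0 i.
Proof.
rewrite /euclid_dotp (bigD1 i) //= big1 => [|j ji].
  by rewrite !mxE !eqxx mulr1 addr0.
by rewrite !mxE (negbTE ji) andbF mulr0.
Qed.

Lemma partial_breg (F : V -> R) (y z : V) i : differentiable F z ->
  partial_deriv i (bregman_div F ^~ y) z = partial_deriv i F z - gradient F y 0 i.
Proof.
move=> dF.
have -> : bregman_div F ^~ y =
   F - (fun w => (F y - dot (gradient F y) y) + dot (gradient F y) w).
  apply/funext => w; rewrite /bregman_div dotBr !fctE; lra.
rewrite /partial_deriv deriveB //; last first.
  by have [] := is_derive_aff (gradient F y) z (std_basis R i) (F y - dot (gradient F y) y).
  exact: diff_derivable.
have [_ ->] := is_derive_aff (gradient F y) z (std_basis R i) (F y - dot (gradient F y) y).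
by rewrite dot_basis.
Qed.

Lemma hess_breg (X : set V) (F : V -> R) (x y : V) :
  open X -> X x -> twice_differentiable_on X F ->
  hessian (bregman_div F ^~ y) x = hessian F x.
Proof.
move=> hX Xx tdF; apply/matrixP => i j; rewrite !mxE.
have nr : \forall z \near x, partial_deriv i (bregman_div F ^~ y) z =
    (partial_deriv i F - cst (gradient F y 0 i)) z.
  apply: filterS (hX x Xx) => z Xz /=; rewrite partial_breg //.
  exact: (tdF z Xz).1.
rewrite {1}/partial_deriv (near_eq_derive _ nr) deriveB.
- by rewrite derive_cst subr0.
- exact/diff_derivable/((tdF x Xx).2 i).
- exact: derivable_cst.
Qed.


Lemma dot_grad_D (F : V -> R) x u : differentiable F x ->
  dot (gradient F x) u = 'D_u F x.
Proof.
move=> dF; rewrite deriveE_sum // /euclid_dotp; apply: eq_bigr => i _.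
by rewrite mxE mulrC.
Qed.

Lemma breg_ge0 (X : set V) (F : V -> R) (x y : V) :
  strictly_convex_on X F -> X x -> X y -> differentiable F x ->
  0 <= bregman_div F y x.
Proof.
move=> sc Xx Xy dF.
have [->|xy] := eqVneq x y.
  by rewrite /bregman_div !subrr /euclid_dotp big1 ?subr0 // => i _; rewrite !mxE mulr0.
rewrite /bregman_div dot_grad_D // subr_ge0.
set u := y - x.
have df : derivable F x u by exact: diff_derivable.
set q := fun h : R => h^-1 *: ((F \o shift x) (h *: u) - F x).
have hl : q @ 0^' --> 'D_u F x by exact: df.
have hr : q @ at_right 0 --> 'D_u F x.
  move=> A /hl /nbhs_ballP [_ /posnumP[e] xe_A].
  by exists e%:num => //= z xe_z /gt_eqF/negbT/xe_A; exact.
apply: (cvgr_to_le hr); near=> h.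
have h0 : 0 < h by near: h; exact: nbhs_right_gt.
have h1 : h < 1 by near: h; exact: nbhs_right_lt.
have := sc x y h Xx Xy xy; rewrite h0 h1 => /(_ isT).
have -> : (1 - h) *: x + h *: y = h *: u + x.
  by apply/rowP => k; rewrite /u !mxE; ring.
move=> lt; rewrite /q /= /GRing.scale /= ler_pdivrMl //.
lra.
Unshelve. all: by end_near.
Qed.


Lemma convex_seg (X : set V) (x q : V) (s : R) : convex_set X -> X x -> X q ->
  0 <= s <= 1 -> X (x + s *: (q - x)).
Proof.
move=> cX Xx Xq /andP[s0 s1].
have := cX q x (Itv01 s0 s1); rewrite !inE => /(_ Xq Xx).
congr X; rewrite /conv /=.
by apply/rowP => k; rewrite !mxE /unstable.onem; ring.
Qed.

Lemma lower_bound (X : set V) (F : V -> R) (tau : R) (x q : V) :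
  open X -> convex_set X -> strictly_convex_on X F ->
  twice_differentiable_on X F -> tau_admissible X F tau -> X x -> X q ->
  spectral_norm (hessian F x) * nrm (q - x) ^+ 2 <= tau ^+ 2 * bregman_div F q x.
Proof.
move=> oX cX sc tdF adm Xx Xq.
set u := q - x.
set S := spectral_norm (hessian F x) * nrm u ^+ 2.
have Xy : forall s : R, 0 <= s <= 1 -> X (x + s *: u) by move=> s hs; exact: convex_seg.
have dF : forall s : R, 0 <= s <= 1 -> differentiable F (x + s *: u).
  by move=> s hs; exact: (tdF _ (Xy s hs)).1.
set k := dot (gradient F x) u.
set psi := fun s => F (x + s *: u) - F x - s * k.
have psiE : forall s, psi s = bregman_div F (x + s *: u) x.
  by move=> s; rewrite /psi /bregman_div (_ : x + s *: u - x = s *: u) ?dotZr // addrC addKr.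
have psi1 : psi 1 = bregman_div F q x by rewrite psiE scale1r /u addrC subrK.
have psi_ge0 : forall s : R, 0 <= s <= 1 -> 0 <= psi s.
  move=> s hs; rewrite psiE; exact: (breg_ge0 sc Xx (Xy s hs) (tdF _ Xx).1).
have adm_s : forall s : R, 0 < s <= 1 ->
    S * s ^+ 2 <= tau ^+ 2 * (F x - F (x + s *: u) + s * 'D_u F (x + s *: u)).
  move=> s /andP[s0 s1].
  have hs : 0 <= s <= 1 by rewrite (ltW s0) s1.
  have [_ h] := adm (x + s *: u) x (Xy s hs) Xx.
  rewrite (hess_breg _ oX Xx tdF) in h.
  have e1 : x - (x + s *: u) = - (s *: u) by rewrite opprD addrA subrr add0r.
  rewrite e1 nrmN nrmZ (ger0_norm (ltW s0)) in h.
  have e2 : bregman_div F x (x + s *: u) = F x - F (x + s *: u) + s * 'D_u F (x + s *: u).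
    by rewrite /bregman_div e1 dotC dotNl dotZl dotC dot_grad_D; [ring | exact: dF s hs].
  rewrite -e2; apply: le_trans h; rewrite /S exprMn; lra.
set dpsi := fun t => 'D_u F (x + t *: u) - k.
have dpsiP : forall t : R, 0 <= t <= 1 -> is_derive t 1 psi (dpsi t).
  move=> t ht.
  have dG := is_derive_line (diff_derivable (v:=u) (dF t ht)).
  have := d_sub (d_sub dG (d_cst (F x) t)) (d_mul (d_id t) (d_cst k t)).
  move=> hh; apply: (is_derive_eq hh); rewrite /dpsi; ring.
set chi := fun t => tau ^+ 2 * (psi t * t^-1) - S * t.
set dchi := fun t => tau ^+ 2 * (dpsi t * t^-1 + psi t * (- t ^- 2)) - S.
have dchiP : forall t : R, 0 < t <= 1 -> is_derive t 1 chi (dchi t).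
  move=> t /andP[t0 t1].
  have ht : 0 <= t <= 1 by rewrite (ltW t0) t1.
  have := d_sub (d_mul (d_cst (tau ^+ 2) t) (d_mul (dpsiP t ht) (d_inv (lt0r_neq0 t0))))
                (d_mul (d_cst S t) (d_id t)).
  move=> hh; apply: (is_derive_eq hh); rewrite /dchi; ring.
have dchi_ge0 : forall t : R, 0 < t <= 1 -> 0 <= dchi t.
  move=> t /andP[t0 t1].
  have := adm_s t; rewrite t0 t1 => /(_ isT) h.
  have e : dchi t = (tau ^+ 2 * (F x - F (x + t *: u) + t * 'D_u F (x + t *: u)) - S * t ^+ 2) / t ^+ 2.
    rewrite /dchi /dpsi /psi; field; exact: lt0r_neq0.
  by rewrite e divr_ge0 ?sqr_ge0 // subr_ge0.
have key : forall s0 : R, 0 < s0 < 1 -> - S * s0 <= tau ^+ 2 * psi 1 - S.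
  move=> s0 /andP[s00 s01].
  have hd : forall t, t \in `]s0, 1[ -> is_derive t 1 chi (dchi t).
    move=> t; rewrite in_itv /= => /andP[a b]; apply: dchiP.
    by rewrite (lt_trans s00 a) ltW.
  have hc : {within `[s0, 1], continuous chi}.
    apply: (@is_derive_line_cont _ _ _ dchi) => t /andP[a b]; apply: dchiP.
    by rewrite (lt_le_trans s00 a) b.
  have [c hc' e] := MVT s01 hd hc.
  have c0 : 0 <= dchi c.
    apply: dchi_ge0; move: hc'; rewrite in_itv /= => /andP[a b].
    by rewrite (lt_trans s00 a) ltW.
  have p0 : 0 <= psi s0 / s0.
    by apply: divr_ge0; [apply: psi_ge0; rewrite (ltW s00) (ltW s01) | exact: ltW].
  have : 0 <= chi 1 - chi s0 by rewrite e mulr_ge0 // subr_ge0 ltW.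
  rewrite /chi invr1 mulr1 mulr1.
  have : 0 <= tau ^+ 2 * (psi s0 / s0) by rewrite mulr_ge0 // sqr_ge0.
  lra.
have P1 : 0 <= psi 1 by rewrite psi_ge0 // ler01 lexx.
rewrite -psi1; set a := tau ^+ 2 * psi 1.
have a0 : 0 <= a by rewrite mulr_ge0 // sqr_ge0.
rewrite leNgt; apply/negP => aS.
have Sp : 0 < S by apply: le_lt_trans aS.
have h1 : 0 < (S - a) / (2 * S) by apply: divr_gt0; lra.
have h2 : (S - a) / (2 * S) < 1.
  have S2 : 0 < 2 * S by lra.
  rewrite ltr_pdivrMr //; lra.
have := key _ (andb_true_intro (conj h1 h2)).
have -> : - S * ((S - a) / (2 * S)) = - (S - a) / 2 by field; exact: lt0r_neq0.
rewrite -/a; lra.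
Qed.


Lemma phi_deriv (X : set V) (F : V -> R) (p v q : V) (t : R) :
  twice_differentiable_on X F -> X (p + t *: v) ->
  is_derive t 1 (fun s => bregman_div F q (p + s *: v))
    (- dot ((q - (p + t *: v)) *m hessian F (p + t *: v)) v).
Proof.
move=> tdF Xy; set y := p + t *: v.
have [dF dP] := tdF y Xy.
have E : (fun s => bregman_div F q (p + s *: v)) =
   (fun s => F q - F (p + s *: v) - \sum_i (partial_deriv i F (p + s *: v) *
                                           (q 0 i - p 0 i - s * v 0 i))).
  apply/funext => s; rewrite /bregman_div /euclid_dotp; congr (_ - _).
  by apply: eq_bigr => i _; rewrite !mxE; congr (_ * _); ring.
rewrite E.
have dG := is_derive_line (diff_derivable (v:=v) dF).
have dS : forall i, is_derive t 1 (fun s => partial_deriv i F (p + s *: v) *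
                                           (q 0 i - p 0 i - s * v 0 i))
    ('D_v (partial_deriv i F) y * (q 0 i - p 0 i - t * v 0 i) +
       partial_deriv i F y * (0 - (1 * v 0 i + t * 0))).
  move=> i; apply: d_mul.
    exact: is_derive_line (diff_derivable (v:=v) (dP i)).
  exact: d_sub (d_cst _ t) (d_mul (d_id t) (d_cst _ t)).
have := d_sub (d_sub (d_cst (F q) t) dG) (d_sum dS).
move=> hh; apply: (is_derive_eq hh).
rewrite big_split /= (deriveE_sum _ dF).
have -> : \sum_i partial_deriv i F y * (0 - (1 * v 0 i + t * 0)) =
          - \sum_i v 0 i * partial_deriv i F y.
  by rewrite -sumrN; apply: eq_bigr => i _; ring.
have -> : \sum_i 'D_v (partial_deriv i F) y * (q 0 i - p 0 i - t * v 0 i) =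
          dot ((q - y) *m hessian F y) v.
  rewrite /euclid_dotp.
  under eq_bigr => i _ do rewrite (deriveE_sum _ (dP i)) mulr_suml.
  under [RHS]eq_bigr => j _ do rewrite mxE mulr_suml.
  rewrite exchange_big /=; apply: eq_bigr => i _; apply: eq_bigr => j _.
  by rewrite !mxE; ring.
ring.
Qed.

End Calc.
Lemma arith_fin (R : realType) (b c0 D eb : R) :
  4 * b - eb <= 4 * c0 -> eb <= b -> 0 <= c0 -> 4 * D <= b -> D <= c0.
Proof. lra. Qed.


Unset Implicit Arguments. Set Strict Implicit.

Theorem lemma9 (R : realType) (d : nat) (X : set 'rV[R]_d) (F : 'rV[R]_d -> R)
    (tau eps beta : R) (w : set 'rV[R]_d) (c : 'rV[R]_d) (r : R) :
  open X -> convex_set X ->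
  strictly_convex_on X F -> twice_differentiable_on X F ->
  tau_admissible X F tau ->
  0 < eps <= 1 ->
  w `<=` X -> 0 <= r -> euclid_ball c r `<=` X ->
  beta >= 4 * tau ^+ 2 / eps ->
  euclid_dist (euclid_ball c r) w >= beta * euclid_diam (euclid_ball c r) ->
  forall q p p', w q -> euclid_ball c r p -> euclid_ball c r p' ->
    `|bregman_div F q p - bregman_div F q p'| / bregman_div F q p <= eps.
Proof.
move=> oX cX sc tdF adm /andP[e0 e1] wX r0 ballX hbeta hdist q p p' wq bp bp'.
set v := p' - p.
set delta := euclid_norm v.
have Xq : X q := wX q wq.
have segB : forall t : R, 0 <= t <= 1 -> euclid_ball c r (p + t *: v).
  move=> t /andP[t0 t1]; rewrite /euclid_ball /=.
  have -> : p + t *: v - c = (1 - t) *: (p - c) + t *: (p' - c).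
    by apply/rowP => k; rewrite /v !mxE; ring.
  apply: le_trans (nrmD _ _) _; rewrite !nrmZ !ger0_norm ?subr_ge0 //.
  have := bp; have := bp'; rewrite /euclid_ball /= => h1 h2.
  have : (1 - t) * euclid_norm (p - c) <= (1 - t) * r by apply: ler_wpM2l; rewrite ?subr_ge0.
  have : t * euclid_norm (p' - c) <= t * r by apply: ler_wpM2l.
  lra.
have XB : forall t : R, 0 <= t <= 1 -> X (p + t *: v) by move=> t ht; apply: ballX; exact: segB.
set phi := fun t => bregman_div F q (p + t *: v).
set dphi := fun t => - euclid_dotp ((q - (p + t *: v)) *m hessian F (p + t *: v)) v.
have dphiP : forall t : R, 0 <= t <= 1 -> is_derive t 1 phi (dphi t).
  by move=> t ht; exact: (phi_deriv _ tdF (XB t ht)).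
have phi_ge0 : forall t : R, 0 <= t <= 1 -> 0 <= phi t.
  by move=> t ht; exact: (breg_ge0 sc (XB t ht) Xq (tdF _ (XB t ht)).1).
have beta0 : 0 <= beta.
  by apply: le_trans hbeta; apply: divr_ge0; [apply: mulr_ge0 => //; exact: sqr_ge0 | exact: ltW].
have Hbe : 4 * tau ^+ 2 <= beta * eps by rewrite -ler_pdivrMr.
have bound : forall t : R, 0 <= t <= 1 -> 4 * `|dphi t| <= eps * phi t.
  move=> t ht.
  set y := p + t *: v.
  set rho := euclid_norm (q - y).
  set sn := spectral_norm (hessian F y).
  have sn0 : 0 <= sn by exact: spectral_ge0.
  have rho0 : 0 <= rho by exact: nrm_ge0.
  have delta0 : 0 <= delta by exact: nrm_ge0.
  have LB : sn * rho ^+ 2 <= tau ^+ 2 * phi t.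
    exact: (lower_bound oX cX sc tdF adm (XB t ht) Xq).
  have HA : `|dphi t| <= sn * rho * delta.
    rewrite /dphi normrN; apply: le_trans (CS _ _) _.
    by apply: ler_wpM2r => //; exact: spectral_bound.
  have Hrho : beta * delta <= rho.
    have h1 := ball_diam bp' bp.
    have h2 := dist_le (segB t ht) wq.
    rewrite nrmB in h2.
    apply: le_trans h2; apply: le_trans hdist; exact: ler_wpM2l.
  have pt0 := phi_ge0 t ht.
  have [rz|rp] := eqVneq rho 0.
    move: HA; rewrite rz mulr0 mul0r => HA.
    have : `|dphi t| = 0 by apply/eqP; rewrite eq_le HA normr_ge0.
    by move=> ->; rewrite mulr0 mulr_ge0 // ltW.
  have rpos : 0 < rho by rewrite lt_neqAle eq_sym rp rho0.
  have H1 : `|dphi t| * rho <= tau ^+ 2 * phi t * delta.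
    apply: le_trans (_ : sn * rho ^+ 2 * delta <= _).
      have := ler_wpM2r rho0 HA; rewrite expr2; lra.
    exact: ler_wpM2r.
  have hpd : 0 <= phi t * delta by rewrite mulr_ge0.
  have hep : 0 <= eps * phi t by rewrite mulr_ge0 // ltW.
  rewrite -(ler_pM2r rpos).
  nra.
have cont : forall a b : R, 0 <= a -> b <= 1 -> {within `[a, b], continuous phi}.
  move=> a b a0 b1; apply: (is_derive_line_cont (df := dphi)) => t /andP[ta tb].
  by apply: dphiP; rewrite (le_trans a0 ta) (le_trans tb b1).
have [cm hcm maxc] := EVT_max ler01 (cont 0 1 (lexx 0) (lexx 1)).
move: (hcm); rewrite in_itv /= => /andP[cm0 cm1].
have der_in : forall a b : R, 0 <= a -> b <= 1 ->
    forall x, x \in `]a, b[ -> is_derive x 1 phi (dphi x).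
  move=> a b a0 b1 x; rewrite in_itv /= => /andP[ax xb]; apply: dphiP.
  by rewrite (le_trans a0 (ltW ax)) (le_trans (ltW xb) b1).
have [xi hxi e1'] := MVT_segment cm0 (der_in 0 cm (lexx 0) cm1) (cont 0 cm (lexx 0) cm1).
move: (hxi); rewrite in_itv /= => /andP[xi0 xic].
have xi01 : 0 <= xi <= 1 by rewrite xi0 (le_trans xic cm1).
have bxi := bound xi xi01.
have mxi : phi xi <= phi cm by apply: maxc; rewrite in_itv /= xi0 (le_trans xic cm1).
have pc0 : 0 <= phi cm by apply: phi_ge0; rewrite cm0 cm1.
have p00 : 0 <= phi 0 by apply: phi_ge0; rewrite lexx ler01.
have step1 : 4 * phi cm - eps * phi cm <= 4 * phi 0.
  have : phi cm - phi 0 <= `|dphi xi| * cm.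
    by rewrite e1' subr0; apply: le_trans (ler_norm _) _; rewrite normrM (ger0_norm cm0).
  have : `|dphi xi| * cm <= `|dphi xi| by rewrite ler_piMr.
  have : eps * phi xi <= eps * phi cm by apply: ler_wpM2l => //; exact: ltW.
  lra.
have [xj hxj e2'] := MVT_segment ler01 (der_in 0 1 (lexx 0) (lexx 1)) (cont 0 1 (lexx 0) (lexx 1)).
move: (hxj); rewrite in_itv /= => /andP[xj0 xj1].
have xj01 : 0 <= xj <= 1 by rewrite xj0 xj1.
have bxj := bound xj xj01.
have mxj : phi xj <= phi cm by apply: maxc; rewrite in_itv /= xj0 xj1.
have step2 : 4 * `|phi 1 - phi 0| <= eps * phi cm.
  rewrite e2' subr0 mulr1; apply: le_trans bxj _; apply: ler_wpM2l => //; exact: ltW.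
have final : `|phi 1 - phi 0| <= eps * phi 0.
  have h3 : eps * (4 * phi cm - eps * phi cm) <= eps * (4 * phi 0) by apply: ler_wpM2l; [exact: ltW | exact: step1].
  have h4 : eps * (eps * phi cm) <= eps * phi cm by apply: ler_piMl; [apply: mulr_ge0 => //; exact: ltW | exact: e1].
  have h5 : 0 <= eps * phi 0 by apply: mulr_ge0 => //; exact: ltW.
  rewrite mulrBr !(mulrCA eps 4) in h3.
  move: h3 h4 h5 step2.
  move: (eps * (eps * phi cm)) (eps * phi cm) (eps * phi 0) `|phi 1 - phi 0| => a b c0 D.
  move: (eps * b) => eb; exact: arith_fin.
have E0 : phi 0 = bregman_div F q p by rewrite /phi scale0r addr0.
have E1 : phi 1 = bregman_div F q p' by rewrite /phi scale1r /v addrC subrK.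
rewrite -E0 -E1 distrC.
have [z|nz] := eqVneq (phi 0) 0.
  by rewrite z invr0 mulr0 ltW.
have pp : 0 < phi 0 by rewrite lt_neqAle eq_sym nz p00.
by rewrite ler_pdivrMr.
Qed.
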